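(* Let $m$ be an even positive integer. Then $|M_1^m|=|M_2^m|$.
   Context: With integers $x,z>0$, $y$: $M_1^m=\{\begin{bmatrix}x&y\\0&z\end{bmatrix}: xz=m,\ 0\leq y<z,\ \gcd(x,y,z)=1,\ x\text{ odd}\}$, $S_1^m=\{\begin{bmatrix}x&y\\0&z\end{bmatrix}: xz=m,\ 0\leq y<z,\ \gcd(x,y,z)=1,\ z\text{ odd}\}$, $S_2^m=\{2^{-1/2}\begin{bmatrix}x&y\\0&z\end{bmatrix}: xz=2m,\ 0\leq y<z,\ \gcd(x,y,z)=1,\ x,z\text{ even}\}$, $M_2^m=S_1^m\cup S_2^m$. *)

(* Defs.v *)
From HB Require Import structures.
From mathcomp Require Import all_boot all_order all_algebra all_field.
From mathcomp Require Import finmap.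
Set Implicit Arguments. Unset Strict Implicit. Unset Printing Implicit Defensive.
Import Order.TTheory GRing.Theory Num.Theory.
Local Open Scope ring_scope.
Local Open Scope fset_scope.

Definition utmx (x y z : nat) : 'M[algC]_2 :=
  \matrix_(i < 2, j < 2)
    (if (i : nat) == 0%N then (if (j : nat) == 0%N then x%:R else y%:R)
     else (if (j : nat) == 0%N then 0 else z%:R)).

Definition triples (N : nat) : seq (nat * nat * nat) :=
  [seq (ab, c) | ab <- [seq (a, b) | a <- iota 0 N, b <- iota 0 N], c <- iota 0 N].

Definition base_cond (d : nat) (t : nat * nat * nat) : bool :=
  let: (x, y, z) := t in
  [&& 0 < x, 0 < z, x * z == d, y < z & gcdn (gcdn x y) z == 1]%N.

Definition M1 (m : nat) : {fset 'M[algC]_2} :=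
  [fset utmx t.1.1 t.1.2 t.2 | t in
     [seq t <- triples m.+1 | base_cond m t && odd t.1.1]].

Definition S1 (m : nat) : {fset 'M[algC]_2} :=
  [fset utmx t.1.1 t.1.2 t.2 | t in
     [seq t <- triples m.+1 | base_cond m t && odd t.2]].

Definition S2 (m : nat) : {fset 'M[algC]_2} :=
  [fset (sqrtC 2)^-1 *: utmx t.1.1 t.1.2 t.2 | t in
     [seq t <- triples (2 * m).+1 |
        base_cond (2 * m) t && ~~ odd t.1.1 && ~~ odd t.2]].

Definition M2 (m : nat) : {fset 'M[algC]_2} := S1 m `|` S2 m.

(* Main.v *)
Require Import Defs.
From HB Require Import structures.
From mathcomp Require Import all_boot all_order all_algebra all_field.
From mathcomp Require Import finmap.
From mathcomp Require Import zify.
Import GRing.Theory Num.Theory.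

Lemma decomp2 n : 0 < n -> exists k c, odd c /\ n = 2 ^ k * c.
Proof.
elim: n {-2}n (leqnn n) => [|N IH] n Hn n0; first by lia.
case Ho: (odd n); first by exists 0, n; rewrite expn0 mul1n.
have H2: 2 %| n by rewrite dvdn2 Ho.
have [h Hh]: exists h, n = 2 * h by exists (n %/ 2); rewrite mulnC divnK.
have [k [c [Hc Hkc]]] := IH h ltac:(lia) ltac:(lia).
by exists k.+1, c; rewrite Hh Hkc expnS mulnA.
Qed.

Lemma logn2E k c : odd c -> logn 2 (2 ^ k * c) = k.
Proof.
move=> Hc; have c0 : 0 < c by case: c Hc.
rewrite lognM ?expn_gt0 // pfactorK // logn_coprime ?addn0 //.
by rewrite coprime2n.
Qed.

Lemma odd_dvd_pow d k c : odd d -> d %| 2 ^ k * c -> d %| c.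
Proof. by move=> Hd; rewrite Gauss_dvdr // coprime_sym coprimeXl // coprime2n. Qed.

Lemma gcd3P x y z : gcdn (gcdn x y) z = 1 <->
  (forall d, d %| x -> d %| y -> d %| z -> d %| 1).
Proof.
split.
- by move=> H d dx dy dz; rewrite -H !dvdn_gcd dx dy dz.
- move=> H; apply/eqP; rewrite -dvdn1; apply: H.
  + exact: dvdn_trans (dvdn_gcdl _ _) (dvdn_gcdl _ _).
  + exact: dvdn_trans (dvdn_gcdl _ _) (dvdn_gcdr _ _).
  + exact: dvdn_gcdr.
Qed.

Definition phi (t : nat * nat * nat) : nat * nat * nat :=
  let: (x, y, z) := t in
  let a := logn 2 z in
  if 2 ^ a %| y then (x * 2 ^ a, y %/ 2 ^ a, z %/ 2 ^ a)
  else let j := logn 2 y in (x * 2 ^ j.+1, y %/ 2 ^ j, z %/ 2 ^ j).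

Definition psi (t : nat * nat * nat) : nat * nat * nat :=
  let: (X, Y, Z) := t in
  let b := logn 2 X in
  let s := if odd Z then 2 ^ b else 2 ^ b.-1 in
  (X %/ 2 ^ b, Y * s, Z * s).

Definition CU m (t : nat * nat * nat) :=
  (base_cond m t && odd t.2) || (base_cond (2 * m) t && ~~ odd t.1.1 && ~~ odd t.2).

Lemma L1 m x y z : base_cond m (x, y, z) -> odd x ->
  CU m (phi (x, y, z)) /\ psi (phi (x, y, z)) = (x, y, z).
Proof.
move=> /and5P [x0 z0 /eqP xz yz /eqP /gcd3P g] ox.
have [a [c [oc ze]]] := decomp2 _ z0; subst z.
have c0 : 0 < c by rewrite lt0n; apply/negP => /eqP c0; rewrite c0 in oc.
have pa : 0 < 2 ^ a by rewrite expn_gt0.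
rewrite /phi logn2E //.
case: ifP => Hdy.
- have [w yw] : exists w, y = 2 ^ a * w by exists (y %/ 2 ^ a); rewrite mulnC divnK.
  subst y; rewrite !mulKn //; split.
  + apply/orP; left; rewrite /base_cond /= oc andbT.
    apply/and5P; split.
    * by rewrite muln_gt0 x0.
    * done.
    * by apply/eqP; rewrite -xz; lia.
    * by rewrite -(ltn_pmul2l pa).
    * apply/eqP/gcd3P => d dX dw dc.
      have od : odd d := dvdn_odd dc oc.
      apply: g => //.
      - by move: dX; rewrite mulnC => /(odd_dvd_pow _ _ _ od).
      - exact: dvdn_mull.
      - exact: dvdn_mull.
  + rewrite /psi /= oc mulnC logn2E // mulKn //.
    by rewrite mulnC (mulnC c).
- have y0 : 0 < y by case: y Hdy yz {g} => //; rewrite dvdn0.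
  have [j [e [oe ye]]] := decomp2 _ y0; subst y.
  have e0 : 0 < e by rewrite lt0n; apply/negP => /eqP e0; rewrite e0 in oe.
  have pj : 0 < 2 ^ j by rewrite expn_gt0.
  have ja : j < a.
    rewrite ltnNge; apply/negP => aj; move: Hdy.
    by rewrite (dvdn_trans (dvdn_exp2l 2 aj)) // dvdn_mulr.
  have [r ar] : exists r, a = j + r.+1 by exists (a - j.+1); lia.
  subst a; rewrite logn2E // expnD -!mulnA !mulKn //; split.
  + apply/orP; right; rewrite /base_cond /=.
    rewrite !oddM !oddX /= !andbF !andbT.
    apply/and5P; split.
    * by rewrite muln_gt0 x0 expn_gt0.
    * by rewrite muln_gt0 expn_gt0 c0.
    * apply/eqP; rewrite -xz expnD !expnS; nia.
    * move: yz; rewrite expnD -mulnA ltn_pmul2l //. 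
    * apply/eqP/gcd3P => d dX de dc.
      have od : odd d := dvdn_odd de oe.
      apply: g => //.
      - by move: dX; rewrite mulnC => /(odd_dvd_pow _ _ _ od).
      - exact: dvdn_mull.
      - by rewrite expnD -mulnA; apply: dvdn_mull.
  + rewrite /psi /= !oddM !oddX /= mulnC logn2E // mulKn ?expn_gt0 //=.
    by rewrite mulnC (mulnC (2 ^ r.+1 * c)).
Qed.

Lemma L2 m X Y Z : CU m (X, Y, Z) ->
  (base_cond m (psi (X, Y, Z)) && odd (psi (X, Y, Z)).1.1) /\ phi (psi (X, Y, Z)) = (X, Y, Z).
Proof.
case/orP => [/andP [/and5P [X0 Z0 /eqP XZ YZ /eqP /gcd3P g] /= oZ]
            | /andP [/andP [/and5P [X0 Z0 /eqP XZ YZ /eqP /gcd3P g] /= eX] eZ]].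
- have [b [x [ox Xe]]] := decomp2 _ X0; subst X.
  have x0 : 0 < x by rewrite lt0n; apply/negP => /eqP x0; rewrite x0 in ox.
  have pb : 0 < 2 ^ b by rewrite expn_gt0.
  rewrite /psi logn2E // oZ mulKn //; split.
  + rewrite /base_cond /= ox andbT; apply/and5P; split => //.
    * by rewrite muln_gt0 Z0.
    * by apply/eqP; rewrite -XZ; lia.
    * by rewrite ltn_pmul2r.
    * apply/eqP/gcd3P => d dx dY dZ.
      have od : odd d := dvdn_odd dx ox.
      apply: g.
      - exact: dvdn_mull.
      - by move: dY; rewrite mulnC => /(odd_dvd_pow _ _ _ od).
      - by move: dZ; rewrite mulnC => /(odd_dvd_pow _ _ _ od).
  + rewrite /phi mulnC logn2E // dvdn_mull // mulnK // mulKn //.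
    by rewrite mulnC.
- have [b [x [ox Xe]]] := decomp2 _ X0; subst X.
  have x0 : 0 < x by rewrite lt0n; apply/negP => /eqP x0; rewrite x0 in ox.
  case: b eX g XZ X0 => [|k] eX g XZ X0; first by rewrite expn0 mul1n ox in eX.
  have pk : 0 < 2 ^ k by rewrite expn_gt0.
  have oY : odd Y.
    apply/negPn/negP => eY; have := g 2.
    by rewrite expnS -mulnA dvdn_mulr // !dvdn2 eY eZ => /(_ isT isT isT).
  rewrite /psi logn2E // (negbTE eZ) /= mulKn ?expn_gt0 //; split.
  + rewrite /base_cond /= ox andbT; apply/and5P; split => //.
    * by rewrite muln_gt0 Z0.
    * apply/eqP; move: XZ; rewrite expnS; lia.
    * by rewrite ltn_pmul2r.
    * apply/eqP/gcd3P => d dx dY dZ.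
      have od : odd d := dvdn_odd dx ox.
      apply: g.
      - exact: dvdn_mull.
      - by move: dY; rewrite mulnC => /(odd_dvd_pow _ _ _ od).
      - by move: dZ; rewrite mulnC => /(odd_dvd_pow _ _ _ od).
  + have [c [Z' [oZ' Ze]]] := decomp2 _ Z0; subst Z.
    case: c eZ oZ' YZ g Z0 XZ => [|c'] eZ; first by move=> oZ'; rewrite expn0 mul1n oZ' in eZ.
    move=> oZ' YZ g Z0 XZ.
    rewrite /phi mulnC mulnA -expnD logn2E //.
    have -> : (2 ^ (k + c'.+1) %| Y * 2 ^ k) = false.
      apply/negP; rewrite mulnC expnD dvdn_pmul2l // expnS => /(dvdn_trans (dvdn_mulr _ (dvdnn 2))).
      by rewrite dvdn2 oY.
    by rewrite (mulnC Y) logn2E // mulKn // expnD -mulnA mulKn // mulnC.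
Qed.
Arguments L1 {m x y z}.
Arguments L2 {m X Y Z}.
Local Open Scope fset_scope.

Lemma mem_fset_seq (s : seq (nat * nat * nat)) t : (t \in [fset x | x in s]) = (t \in s).
Proof. by rewrite inE. Qed.

Lemma mem_triples N x y z : ((x, y, z) \in triples N) = [&& x < N, y < N & z < N].
Proof.
rewrite /triples; apply/allpairsP/and3P.
- case=> [[ab c] /= [Hab Hc E]]; case: E => Eab Ec; subst.
  move/allpairsP: Hab => [[a b] /= [Ha Hb E]]; case: E => Ea Eb; subst.
  by rewrite !mem_iota /= !add0n in Ha Hb Hc; rewrite Ha Hb Hc.
- case=> hx hy hz; exists ((x, y), z); split => //=; last by rewrite mem_iota.
  by apply/allpairsP; exists (x, y); rewrite /= !mem_iota.
Qed.

Lemma base_triples d t : base_cond d t -> t \in triples d.+1.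
Proof.
case: t => [[x y] z] /and5P [x0 z0 /eqP xz yz _].
rewrite mem_triples; apply/and3P; split; nia.
Qed.
Arguments base_triples {d t}.

Lemma utmx_inj : injective (fun t : nat * nat * nat => utmx t.1.1 t.1.2 t.2).
Proof.
move=> [[x y] z] [[x' y'] z'] /= H.
have h00 := congr1 (fun M : 'M[algC]_2 => M ord0 ord0) H.
have h01 := congr1 (fun M : 'M[algC]_2 => M ord0 ord_max) H.
have h11 := congr1 (fun M : 'M[algC]_2 => M ord_max ord_max) H.
move: h00 h01 h11; rewrite /utmx !mxE /=.
by move=> /eqP; rewrite eqr_nat => /eqP -> /eqP; rewrite eqr_nat => /eqP -> /eqP; rewrite eqr_nat => /eqP ->.
Qed.

Lemma sqrt2_nz : ((sqrtC (2 : algC))^-1 != 0)%R.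
Proof. by rewrite invr_eq0 sqrtC_eq0 pnatr_eq0. Qed.

Lemma utmx2_inj : injective (fun t : nat * nat * nat => ((sqrtC 2)^-1 *: utmx t.1.1 t.1.2 t.2)%R).
Proof. by move=> t t' /= /(scalerI sqrt2_nz) /utmx_inj. Qed.

Lemma no_sqrt2 x X : 0 < x -> 0 < X -> x ^ 2 * 2 <> X ^ 2.
Proof.
move=> x0 X0 /(congr1 (logn 2)).
rewrite lognM ?expn_gt0 ?x0 // !lognX (pfactorK 1 (isT : prime 2)).
lia.
Qed.

Lemma S12_disj m : S1 m `&` S2 m = fset0.
Proof.
apply/fsetP => M; rewrite !inE; apply/negP => /andP [/imfsetP [[[x y] z] Ht ->] /imfsetP [[[X Y] Z] Ht' E]].
move: Ht Ht'; rewrite !mem_filter => /andP [/andP [/and5P [x0 _ _ _ _] _] _].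
move=> /andP [/andP [/andP [/and5P [X0 _ _ _ _] _] _] _].
have := congr1 (fun M : 'M[algC]_2 => M ord0 ord0) E.
rewrite /utmx /= !mxE /= => h.
have h2 : (x%:R * sqrtC 2 = X%:R :> algC)%R.
  by rewrite h mulrAC mulVf ?mul1r // sqrtC_eq0 pnatr_eq0.
have h3 : ((x ^ 2 * 2)%:R = (X ^ 2)%:R :> algC)%R.
  by rewrite natrM !natrX -h2 exprMn sqrtCK.
move/eqP: h3; rewrite eqr_nat => /eqP; exact: no_sqrt2.
Qed.

Theorem lemma2p6 (m : nat) (hm : (0 < m)%N) (heven : ~~ odd m) :
  #|` M1 m| = #|` M2 m|.
Proof.
set s1 := [seq t <- triples m.+1 | base_cond m t && odd t.1.1].
set s2 := [seq t <- triples m.+1 | base_cond m t && odd t.2].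
set s3 := [seq t <- triples (2 * m).+1 |
        base_cond (2 * m) t && ~~ odd t.1.1 && ~~ odd t.2].
set A := [fset t | t in s1].
set B1 := [fset t | t in s2].
set B2 := [fset t | t in s3].
have idI : injective (fun t : nat * nat * nat => t) by [].
have cM1 : #|` M1 m| = #|` A| by rewrite /M1 /A !card_imfset //; exact: utmx_inj.
have cS1 : #|` S1 m| = #|` B1| by rewrite /S1 /B1 !card_imfset //; exact: utmx_inj.
have cS2 : #|` S2 m| = #|` B2| by rewrite /S2 /B2 !card_imfset //; exact: utmx2_inj.
have cM2 : #|` M2 m| = #|` B1 `|` B2|.
  rewrite /M2; apply/eqP; rewrite -(eqn_add2r #|` S1 m `&` S2 m|) cardfsUI.
  rewrite S12_disj cardfs0 addn0 cS1 cS2 -cardfsUI.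
  suff -> : B1 `&` B2 = fset0 by rewrite cardfs0 addn0.
  apply/fsetP => t; rewrite in_fsetI in_fset0 mem_fset_seq mem_fset_seq !mem_filter.
  case: t => [[x y] z]; apply/negP => /andP [/andP [/andP [/and5P [_ _ /eqP E1 _ _] _] _]].
  move=> /andP [/andP [/andP [/and5P [_ _ /eqP E2 _ _] _] _] _].
  lia.
rewrite cM1 cM2.
have inA t : (t \in A) = base_cond m t && odd t.1.1.
  rewrite mem_fset_seq mem_filter.
  by case Hb: (base_cond m t) => //=; rewrite (base_triples Hb) ?andbT.
have inU t : (t \in B1 `|` B2) = CU m t.
  rewrite inE mem_fset_seq mem_fset_seq !mem_filter /CU.
  case Hb: (base_cond m t); case Hb2: (base_cond (2 * m) t);
    rewrite /= ?andbT ?andbF ?orbF //; rewrite ?(base_triples Hb) ?(base_triples Hb2) ?andbT //.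
apply/eqP; rewrite eqn_leq; apply/andP; split.
- have Hc : #|` phi @` A| = #|` A|.
    apply: card_in_imfset.
    move=> [[x y] z] [[x' y'] z']; rewrite !inA => /andP [hb ho] /andP [hb' ho'] E.
    by rewrite -(L1 hb ho).2 E (L1 hb' ho').2.
  rewrite -Hc.
  apply: fsubset_leq_card; apply/fsubsetP => u /imfsetP [[[x y] z] /= tA ->].
    rewrite inU; move: tA; rewrite inA => /andP [hb ho]; exact: (L1 hb ho).1.
- have Hc : #|` psi @` (B1 `|` B2)| = #|` B1 `|` B2|.
    apply: card_in_imfset.
    move=> [[x y] z] [[x' y'] z']; rewrite !inU => h h' E.
    by rewrite -(L2 h).2 E (L2 h').2.
  rewrite -Hc.
  apply: fsubset_leq_card; apply/fsubsetP => u /imfsetP [[[x y] z] /= tU ->].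
    rewrite inA; move: tU; rewrite inU => h; exact: (L2 h).1.
Qed.
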